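(* There is a universal constant $C>0$ such that for all $q>2$, integers $n,p\ge1$, and $\sigma,B>0$ with $(B^2/\sigma^2)^{q/(q-2)}\,(\ln(2p)/n)>e$, \[ \mathcal{E}_q(\sigma,B)\le C\,B\Big(\frac{\ln(2p)}n\Big)^{1-1/q}\Big[\ln\Big(\frac{B^2}{\sigma^2}\Big(\frac{\ln(2p)}n\Big)^{1-2/q}\Big)\Big]^{1/q-1}. \]
   Context: For independent mean-zero random vectors $\boldsymbol{X}_1,\dots,\boldsymbol{X}_n$ in $\mathbb{R}^p$ with joint law $P^n$, set $\mathcal{V}(P^n)=\max_{1\le j\le p}\frac1n\sum_{i=1}^n\mathbb{E}[X_i(j)^2]$ and $\mathcal{D}_q(P^n)=(\frac1n\sum_{i=1}^n\mathbb{E}[\max_{1\le j\le p}|X_i(j)|^q])^{1/q}$. $\mathcal{E}_q(\sigma,B)$ is the supremum of $\mathbb{E}[\max_{1\le j\le p}|\frac1n\sum_{i=1}^nX_i(j)|]$ over all such laws with $\mathcal{V}(P^n)\le\sigma^2$ and $\mathcal{D}_q(P^n)\le B$. The constant $C$ does not depend on $n,p,q,\sigma,B$. *)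

(* Defs.v *)
From HB Require Import structures.
From mathcomp Require Import all_boot all_order all_algebra.
From mathcomp Require Import all_classical all_reals all_analysis.
Set Implicit Arguments. Unset Strict Implicit. Unset Printing Implicit Defensive.
Import Order.TTheory GRing.Theory Num.Theory.
Local Open Scope classical_set_scope.
Local Open Scope ring_scope.

(* A random vector in R^p is represented as Y : T -> 'I_p -> R
   (coordinates Y t j = Y(j)). *)

Definition rvec_sigma (R : realType) (T : Type) (p : nat)
  (Y : T -> 'I_p -> R) : set (set T) :=
  <<s setT, \bigcup_(j in [set: 'I_p])
        preimage_set_system setT (fun t => Y t j) (@measurable _ R) >>.

(* Mutual independence of the random vectors X_1, ..., X_n under P:
   product rule for events E_i in sigma(X_i) (taking E_i = T covers
   every subfamily). *)
Definition indep_rvecs (R : realType) (d : measure_display)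
  (T : measurableType d) (P : probability T R) (n p : nat)
  (X : 'I_n -> T -> 'I_p -> R) : Prop :=
  forall E : 'I_n -> set T, (forall i, rvec_sigma (X i) (E i)) ->
    P (\bigcap_(i in [set: 'I_n]) E i) = (\prod_(i < n) P (E i))%E.

Definition Vvar (R : realType) (d : measure_display)
  (T : measurableType d) (P : probability T R) (n p : nat)
  (X : 'I_n -> T -> 'I_p -> R) : \bar R :=
  (\big[maxe/0%E]_(j < p)
     ((n%:R^-1)%:E * \sum_(i < n) \int[P]_t ((X i t j) ^+ 2)%:E))%E.

Definition Dq (R : realType) (d : measure_display)
  (T : measurableType d) (P : probability T R) (n p : nat)
  (X : 'I_n -> T -> 'I_p -> R) (q : R) : \bar R :=
  poweR ((n%:R^-1)%:E *
     \sum_(i < n) \int[P]_t ((\big[Num.max/0]_(j < p) `|X i t j|) `^ q)%:E)%E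
    q^-1.

Definition Emax (R : realType) (d : measure_display)
  (T : measurableType d) (P : probability T R) (n p : nat)
  (X : 'I_n -> T -> 'I_p -> R) : \bar R :=
  (\int[P]_t (\big[Num.max/0]_(j < p) `|n%:R^-1 * \sum_(i < n) X i t j|)%:E)%E.

(* Main.v *)
Require Import Defs.
From HB Require Import structures.
From mathcomp Require Import all_boot all_order all_algebra.
From mathcomp Require Import all_classical all_reals all_analysis.
From mathcomp Require Import ring lra measurable_realfun.
Import Order.TTheory GRing.Theory Num.Theory.
Local Open Scope classical_set_scope.
Local Open Scope ring_scope.

Section RealAux.
Variable R : realType.

Lemma expR_quad (x K : R) : x <= K -> 0 <= K -> expR x <= 1 + x + x ^+ 2 * expR K.
Proof.
move=> xK K0.
have h1 : 1 - x <= expR (- x) by have := expR_ge1Dx (- x).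
have u0 : 0 < expR x := expR_gt0 x.
have h2 : expR x * (1 - x) <= 1.
  by have := ler_wpM2l (ltW u0) h1; rewrite -expRD addrN expR0.
have h3 : 1 + x <= expR x := expR_ge1Dx x.
have h4 : expR x <= expR K by rewrite ler_expR.
have h5 : 1 <= expR K by rewrite -expR0 ler_expR.
have [x0|x0] := leP 0 x.
  have : x * (expR x - 1) <= x * (x * expR K).
    apply: ler_wpM2l => //. nra.
  nra.
nra.
Qed.

Lemma lse_bound (x c : R) : 0 < c -> x + 1 <= expR x / c + ln c.
Proof.
move=> c0; have := expR_ge1Dx (x - ln c).
rewrite expRD expRN lnK ?posrE //. lra.
Qed.

End RealAux.


Lemma measurable_bigmax (R : realType) d (T : measurableType d) (D : set T) k
  (f : 'I_k -> T -> R) : (forall i, measurable_fun D (f i)) ->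
  measurable_fun D (fun x => \big[Num.max/0]_(i < k) f i x).
Proof.
elim: k f => [|k ih] f mf.
  by under eq_fun do rewrite big_ord0; exact: measurable_cst.
have -> : (fun x => \big[Num.max/0]_(i < k.+1) f i x) =
  (fun x => Num.max (f ord0 x) (\big[Num.max/0]_(i < k) f (lift ord0 i) x)).
  by apply: funext => x; rewrite big_ord_recl.
apply: measurable_realfun.measurable_maxr => //.
exact: (ih (fun i => f (lift ord0 i))).
Qed.

Section Disc.
Variable R : realType.
Variables (dl : R) (N : nat).
Hypothesis dl0 : 0 < dl.

Definition Tp (x : R) : R :=
  \big[Num.max/0]_(m < N.+1) (if m%:R * dl <= x then m%:R * dl else 0).

Definition gridS : seq R := [seq m%:R * dl | m <- iota 0 N.+1].

Lemma Tp_ge0 x : 0 <= Tp x.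
Proof.
rewrite /Tp; elim/big_ind: _ => //.
  by move=> a b a0 b0; rewrite le_max a0.
by move=> i _; case: ifP => // _; rewrite mulr_ge0 // ltW.
Qed.

Lemma Tp_le x : 0 <= x -> Tp x <= x.
Proof.
move=> x0; rewrite /Tp; apply: bigmax_le => // i _.
by case: ifP.
Qed.

Lemma Tp_neg x : x <= 0 -> Tp x = 0.
Proof.
move=> x0; apply/eqP; rewrite eq_le Tp_ge0 andbT /Tp.
apply: bigmax_le => // i _; case: ifP => // h.
exact: le_trans h x0.
Qed.

Lemma Tp_leN x : Tp x <= N%:R * dl.
Proof.
rewrite /Tp; apply: bigmax_le; first by rewrite mulr_ge0 // ltW.
move=> i _; case: ifP => _; last by rewrite mulr_ge0 // ltW.
by rewrite ler_wpM2r ?(ltW dl0) // ler_nat -ltnS.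
Qed.

Lemma Tp_gt x : 0 <= x -> x <= N%:R * dl -> x - dl < Tp x.
Proof.
move=> x0 xN.
have fl0 : 0 <= Num.floor (x / dl) by rewrite floor_ge0 divr_ge0 // ltW.
have [m hm] : exists m : nat, Num.floor (x / dl) = m%:Z.
  by case: (Num.floor (x / dl)) fl0 => // m _; exists m.
have h1 : m%:R <= x / dl by have := floor_le (x / dl); rewrite hm.
have h2 : x / dl < m%:R + 1 by have := floorD1_gt (x / dl); rewrite hm intrD.
have h1' : m%:R * dl <= x by rewrite -ler_pdivlMr.
have h2' : x < (m%:R + 1) * dl by rewrite -ltr_pdivrMr.
have mN : (m < N.+1)%N.
  rewrite ltnS -(ler_nat R); rewrite -(ler_pM2r dl0).
  exact: le_trans h1' xN.
apply: (@lt_le_trans _ _ (m%:R * dl)); first by lra.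
rewrite /Tp; apply: le_trans (le_bigmax _ _ (Ordinal mN)).
by rewrite /= h1'.
Qed.

Lemma Tp_in x : Tp x \in gridS.
Proof.
rewrite /Tp; elim/big_ind: _.
- by apply/mapP; exists 0%N; rewrite ?mul0r // mem_iota.
- by move=> a b ha hb; case: (leP a b).
- move=> i _; case: ifP => _.
    by apply/mapP; exists (nat_of_ord i); rewrite // mem_iota /= ltn_ord.
  by apply/mapP; exists 0%N; rewrite ?mul0r // mem_iota.
Qed.

Lemma measurable_Tp : measurable_fun setT Tp.
Proof.
apply: measurable_bigmax => i.
apply: measurable_fun_ifT.
- by apply: measurable_realfun.measurable_fun_ler => //; exact: measurable_cst.
- exact: measurable_cst.
- exact: measurable_cst.
Qed.

Definition Yd (x : R) : R := Tp x - Tp (- x).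

Lemma Yd_pos x : 0 <= x -> Yd x = Tp x.
Proof. by move=> x0; rewrite /Yd [Tp (- x)]Tp_neg ?subr0 // oppr_le0. Qed.

Lemma Yd_neg x : x <= 0 -> Yd x = - Tp (- x).
Proof. by move=> x0; rewrite /Yd Tp_neg ?sub0r. Qed.

Lemma Yd_abs x : `|Yd x| <= `|x|.
Proof.
have [x0|x0] := leP 0 x.
  by rewrite Yd_pos // ger0_norm ?Tp_ge0 // ger0_norm // Tp_le.
rewrite Yd_neg ?(ltW x0) // normrN ger0_norm ?Tp_ge0 // ltr0_norm //.
by rewrite Tp_le // oppr_ge0 ltW.
Qed.

Lemma Yd_absN x : `|Yd x| <= N%:R * dl.
Proof.
have [x0|x0] := leP 0 x.
  by rewrite Yd_pos // ger0_norm ?Tp_ge0 // Tp_leN.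
by rewrite Yd_neg ?(ltW x0) // normrN ger0_norm ?Tp_ge0 // Tp_leN.
Qed.

Lemma Yd_err x : `|x - Yd x| <= `|x|.
Proof.
have [x0|x0] := leP 0 x.
  rewrite Yd_pos // (ger0_norm x0); have h1 := Tp_ge0 x; have h2 := @Tp_le x x0.
  rewrite ler_norml; apply/andP; split; lra.
rewrite Yd_neg ?(ltW x0) // (ltr0_norm x0).
have h1 := Tp_ge0 (- x); have h2 : Tp (- x) <= - x by apply: Tp_le; lra.
rewrite ler_norml; apply/andP; split; lra.
Qed.

Lemma Yd_err_small x : `|x| <= N%:R * dl -> `|x - Yd x| < dl.
Proof.
have [x0|x0] := leP 0 x.
  rewrite Yd_pos // (ger0_norm x0) => xN.
  have h1 := @Tp_gt x x0 xN; have h2 := @Tp_le x x0.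
  rewrite ltr_norml; apply/andP; split; lra.
rewrite Yd_neg ?(ltW x0) // (ltr0_norm x0) => xN.
have x0' : 0 <= - x by lra.
have h1 := @Tp_gt (-x) x0' xN; have h2 := @Tp_le (-x) x0'.
rewrite ltr_norml; apply/andP; split; lra.
Qed.

Definition gridY : seq R := [seq a - b | a <- gridS, b <- gridS].

Lemma Yd_in x : Yd x \in gridY.
Proof. exact: (allpairs_f (fun a b : R => a - b) (Tp_in x) (Tp_in (- x))). Qed.

Lemma measurable_Yd : measurable_fun setT Yd.
Proof.
apply: measurable_funB; first exact: measurable_Tp.
apply: measurableT_comp; first exact: measurable_Tp.
exact: measurable_funN.
Qed.

End Disc.


Section Indep.
Variables (R : realType) (d : measure_display) (T : measurableType d)
  (P : probability T R) (n p : nat) (X : 'I_n -> T -> 'I_p -> R).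
Hypothesis mX : forall i j, measurable_fun setT (fun t => X i t j).
Hypothesis indX : indep_rvecs P X.

Lemma sigma_pre i j (B : set R) : measurable B ->
  rvec_sigma (X i) ((fun t => X i t j) @^-1` B).
Proof.
move=> mB; rewrite /rvec_sigma; apply: sub_gen_smallest.
exists j => //; exists B => //; by rewrite setTI.
Qed.

Lemma PE (A : set T) : measurable A -> P A = (fine (P A))%:E.
Proof. by move=> mA; rewrite fineK // fin_num_measure. Qed.

Lemma int_simple (I : finType) (c : I -> R) (A : I -> set T) :
  (forall k, 0 <= c k) -> (forall k, measurable (A k)) ->
  (\int[P]_t (\sum_k c k * \1_(A k) t)%:E = (\sum_k c k * fine (P (A k)))%:E)%E.
Proof.
move=> c0 mA.
under eq_integral do rewrite -sumEFin.
rewrite ge0_integral_sum //; last first.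
- by move=> k t _; rewrite lee_fin mulr_ge0.
- move=> k; apply/measurable_EFinP; apply: measurable_funM.
    exact: measurable_cst.
  exact: measurable_indic.
rewrite -sumEFin; apply: eq_bigr => k _.
under eq_integral do rewrite EFinM.
rewrite ge0_integralZl //; try by [rewrite lee_fin | move=> t _; rewrite lee_fin indicE | apply/measurable_EFinP; exact: measurable_indic].
by rewrite integral_indic // setIT EFinM -PE.
Qed.

Lemma indic_bigcap (I : finType) (E : I -> set T) t :
  \1_(\bigcap_(i in [set: I]) E i) t = \prod_i (\1_(E i) t : R).
Proof.
have [h|h] := pselect (forall i, E i t).
  rewrite indicE mem_set; last by move=> i _; exact: h.
  by rewrite big1 // => i _; rewrite indicE mem_set.
have [i hi] : exists i, ~ E i t.
  by apply: contrapT => hn; apply: h => i; apply: contrapT => hi; apply: hn; exists i.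
rewrite indicE memNset; last by move=> hc; apply: hi; exact: hc.
by rewrite (bigD1 i) //= indicE memNset // mul0r.
Qed.

Lemma decomp (F : R -> R) (s : seq R) (x : R) : F x \in s ->
  F x = \sum_(k < size (undup s)) nth 0 (undup s) k *
          \1_[set y | F y = nth 0 (undup s) k] x.
Proof.
move=> hs; have hs' : F x \in undup s by rewrite mem_undup.
have hk : (index (F x) (undup s) < size (undup s))%N by rewrite index_mem.
rewrite (bigD1 (Ordinal hk)) //= big1 ?addr0.
  by rewrite nth_index // indicE mem_set ?mulr1 // /= nth_index.
move=> k hk'; rewrite indicE memNset ?mulr0 // /= => hF.
move/eqP: hk'; apply; apply: val_inj => /=.
by rewrite hF index_uniq ?undup_uniq.
Qed.

Lemma indep_prod j (F : 'I_n -> R -> R) (s : seq R) :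
  (forall i, measurable_fun setT (F i)) -> (forall i x, F i x \in s) ->
  (forall v, v \in s -> 0 <= v) ->
  (\int[P]_t (\prod_i F i (X i t j))%:E = \prod_i \int[P]_t (F i (X i t j))%:E)%E.
Proof.
move=> mF Fs s0.
pose K := size (undup s); pose v (k : 'I_K) := nth 0 (undup s) k.
pose E i (k : 'I_K) := (fun t => X i t j) @^-1` [set y | F i y = v k].
have mB i k : measurable [set y | F i y = v k].
  by have := mF i measurableT _ (measurable_set1 (v k)); rewrite setTI.
have mE i k : measurable (E i k).
  by have := mX i j measurableT _ (mB i k); rewrite setTI.
have v0 k : 0 <= v k.
  by apply: s0; rewrite -mem_undup; apply: mem_nth; exact: ltn_ord.
have dec i t : F i (X i t j) = \sum_k v k * \1_(E i k) t.
  by rewrite (@decomp (F i) s (X i t j) (Fs i _)).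
have -> : (\prod_i \int[P]_t (F i (X i t j))%:E =
    (\prod_i \sum_k v k * fine (P (E i k)))%:E)%E.
  rewrite -prodEFin; apply: eq_bigr => i _.
  under eq_integral do rewrite dec.
  exact: int_simple.
have -> : (\int[P]_t (\prod_i F i (X i t j))%:E =
   \int[P]_t (\sum_(f : {ffun 'I_n -> 'I_K}) (\prod_i v (f i)) *
      \1_(\bigcap_(i in [set: 'I_n]) E i (f i)) t)%:E)%E.
  apply: eq_integral => t _; congr (_%:E).
  under eq_bigr do rewrite dec.
  rewrite bigA_distr_bigA; apply: eq_bigr => f _.
  by rewrite big_split /= indic_bigcap.
rewrite int_simple; last 2 first.
- by move=> f; apply: prodr_ge0 => i _.
- by move=> f; apply: fin_bigcap_measurable; [exact: finite_finset | move=> i _; exact: mE].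
congr (_%:E); rewrite bigA_distr_bigA; apply: eq_bigr => f _.
rewrite big_split /=; congr (_ * _).
rewrite (indX (fun i => E i (f i))); last by move=> i; apply: sigma_pre; exact: mB.
rewrite [X in fine X](eq_bigr (fun i => (fine (P (E i (f i))))%:E)); last first.
  by move=> i _; rewrite -PE.
by rewrite prodEFin.
Qed.

End Indep.


Section Fin.
Variable R : realType.
Local Open Scope ereal_scope.

Lemma sum_fin (k : nat) (a : 'I_k -> \bar R) (b : R) :
  (forall i, 0 <= a i) -> \sum_(i < k) a i <= b%:E ->
  (forall i, a i = (fine (a i))%:E) /\ (\sum_(i < k) fine (a i) <= b)%R.
Proof.
move=> a0 hb.
have ai i : a i = (fine (a i))%:E.
  rewrite fineK // ge0_fin_numE //.
  apply: (le_lt_trans _ (ltry b)); apply: le_trans hb.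
  rewrite (bigD1 i) //= leeDl //; exact: sume_ge0.
split => //; rewrite -lee_fin -sumEFin.
by under eq_bigr do rewrite -ai.
Qed.

Lemma mul_inv_le (m : nat) (S : \bar R) (b : R) : (0 < m)%N ->
  (m%:R^-1)%:E * S <= b%:E -> S <= (m%:R * b)%:E.
Proof.
move=> m0 h.
have m0' : (0 < m%:R :> R)%R by rewrite ltr0n.
have -> : S = m%:R%:E * ((m%:R^-1)%:E * S).
  by rewrite muleA -EFinM mulfV ?gt_eqF // mul1e.
by rewrite EFinM; apply: lee_wpmul2l => //; rewrite lee_fin ltW.
Qed.

Lemma poweR_le (z : \bar R) (r B : R) : 0 <= z -> (0 < r)%R -> (0 < B)%R ->
  poweR z r^-1 <= B%:E -> z <= (B `^ r)%:E.
Proof.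
move=> z0 r0 B0; case: z z0 => [z| |] //= z0.
  rewrite !lee_fin in z0 * => h.
  have -> : (z = (z `^ r^-1) `^ r)%R by rewrite -powRrM mulVf ?gt_eqF // powRr1.
  apply: ge0_ler_powR => //; [exact: ltW|by rewrite nnegrE powR_ge0|by rewrite nnegrE ltW].
by rewrite invr_eq0 gt_eqF.
Qed.

Lemma fin_between (u : \bar R) (b : R) : 0 <= u -> u <= b%:E ->
  u = (fine u)%:E /\ (fine u <= b)%R.
Proof.
move=> u0 ub.
have uf : u \is a fin_num by rewrite ge0_fin_numE // (le_lt_trans ub) // ltry.
by split; [rewrite fineK|rewrite -lee_fin fineK].
Qed.

End Fin.


Section Lin.
Variables (R : realType) (d : measure_display) (T : measurableType d)
  (P : probability T R).

Lemma int_lin3 (a b c : R) (f g : T -> R) : 0 <= a -> 0 <= b -> 0 <= c ->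
  measurable_fun setT f -> measurable_fun setT g ->
  (forall t, 0 <= f t) -> (forall t, 0 <= g t) ->
  (\int[P]_t (a * f t + b * g t + c)%:E =
    a%:E * \int[P]_t (f t)%:E + b%:E * \int[P]_t (g t)%:E + c%:E)%E.
Proof.
move=> a0 b0 c0 mf mg f0 g0.
have maf : measurable_fun setT (fun t => (a * f t)%:E).
  by apply/measurable_EFinP; apply: measurable_funM => //; exact: measurable_cst.
have mbg : measurable_fun setT (fun t => (b * g t)%:E).
  by apply/measurable_EFinP; apply: measurable_funM => //; exact: measurable_cst.
have pa t : [set: T] t -> (0 <= (a * f t)%:E)%E by move=> _; rewrite lee_fin mulr_ge0.
have pb t : [set: T] t -> (0 <= (b * g t)%:E)%E by move=> _; rewrite lee_fin mulr_ge0.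
have pab t : [set: T] t -> (0 <= (a * f t)%:E + (b * g t)%:E)%E.
  by move=> _; rewrite adde_ge0 // ?pa ?pb.
have pc t : [set: T] t -> (0 <= (cst c%:E t))%E by move=> _; rewrite lee_fin.
have mab : measurable_fun setT (fun t => (a * f t)%:E + (b * g t)%:E)%E.
  exact: emeasurable_funD.
have mc : measurable_fun setT (cst c%:E : T -> \bar R) by exact: measurable_cst.
under eq_integral do rewrite !EFinD.
rewrite (ge0_integralD _ _ pab mab pc mc) //.
rewrite (ge0_integralD _ _ pa maf pb mbg) //.
rewrite integral_cst //.
rewrite [X in (c%:E * X)%E](_ : _ = 1%E); last exact: probability_setT.
rewrite mule1.
have mf' : measurable_fun setT (fun t => (f t)%:E) by apply/measurable_EFinP.
have mg' : measurable_fun setT (fun t => (g t)%:E) by apply/measurable_EFinP.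
have pf t : [set: T] t -> (0 <= (f t)%:E)%E by move=> _; rewrite lee_fin.
have pg t : [set: T] t -> (0 <= (g t)%:E)%E by move=> _; rewrite lee_fin.
have a0' : (0 <= a%:E)%E by rewrite lee_fin.
have b0' : (0 <= b%:E)%E by rewrite lee_fin.
under eq_integral do rewrite EFinM.
rewrite ge0_integralZl //.
under [X in (_ + X + _)%E]eq_integral do rewrite EFinM.
by rewrite ge0_integralZl.
Qed.

Lemma int_lin1 (a c : R) (f : T -> R) : 0 <= a -> 0 <= c ->
  measurable_fun setT f -> (forall t, 0 <= f t) ->
  (\int[P]_t (a * f t + c)%:E = a%:E * \int[P]_t (f t)%:E + c%:E)%E.
Proof.
move=> a0 c0 mf f0.
have := @int_lin3 a 0 c f f a0 (lexx 0) c0 mf mf f0 f0.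
rewrite mul0e adde0 => <-; apply: eq_integral => t _.
by rewrite mul0r addr0.
Qed.

End Lin.


Section MainS.
Variables (R : realType) (d : measure_display) (T : measurableType d)
  (P : probability T R) (n p : nat) (X : 'I_n -> T -> 'I_p -> R) (q : R).
Hypothesis mX : forall i j, measurable_fun setT (fun t => X i t j).
Hypothesis iX : forall i j, P.-integrable setT (fun t => (X i t j)%:E).
Hypothesis X0 : forall i j, (\int[P]_t (X i t j)%:E = 0)%E.
Hypothesis indX : indep_rvecs P X.
Hypothesis q1 : 1 < q.

Definition mx i t := \big[Num.max/0]_(j < p) `|X i t j|.
Definition Qf i t := mx i t `^ q.

Lemma mx_ge0 i t : 0 <= mx i t.
Proof. by rewrite /mx; elim/big_ind: _ => // a b ha hb; rewrite le_max ha. Qed.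

Lemma mx_le i t j : `|X i t j| <= mx i t.
Proof. exact: le_bigmax. Qed.

Lemma measurable_mx i : measurable_fun setT (mx i).
Proof.
apply: measurable_bigmax => j.
by apply: measurableT_comp; [exact: normr_measurable|exact: mX].
Qed.

Lemma measurable_Qf i : measurable_fun setT (Qf i).
Proof.
exact: (measurableT_comp (@measurable_powR R q) (measurable_mx i)).
Qed.

Lemma Qf_ge0 i t : 0 <= Qf i t.
Proof. exact: powR_ge0. Qed.

Variables (M lam : R) (N : nat).
Hypotheses (M0 : 0 < M) (lam0 : 0 < lam) (N0 : (0 < N)%N).

Definition dl := M / N%:R.

Lemma dl0 : 0 < dl.
Proof. by rewrite divr_gt0 // ltr0n. Qed.

Lemma NdlE : N%:R * dl = M.
Proof. by rewrite /dl mulrC -mulrA mulVf ?mulr1 // pnatr_eq0 -lt0n. Qed.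

Definition Ydisc i j t := Yd R dl N (X i t j).

Lemma dev_bound i j t :
  `|X i t j - Ydisc i j t| <= dl + Qf i t / M `^ (q - 1).
Proof.
rewrite /Ydisc; set x := X i t j.
have hQ : 0 <= Qf i t / M `^ (q - 1) by rewrite divr_ge0 // ?Qf_ge0 ?powR_ge0.
have [xM|xM] := leP `|x| M.
  apply: ltW; apply: lt_le_trans (@Yd_err_small R dl N dl0 x _) _.
    by rewrite NdlE.
  by rewrite lerDl.
apply: le_trans (@Yd_err R dl N dl0 x) _.
apply: le_trans (_ : Qf i t / M `^ (q - 1) <= _); last by rewrite lerDr ltW // dl0.
have hm : `|x| <= mx i t := mx_le i t j.
have m0 : 0 < mx i t by apply: lt_le_trans hm; apply: lt_trans xM.
apply: le_trans hm _.
have e : mx i t `^ q = mx i t * mx i t `^ (q - 1).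
  rewrite -[X in X * _](powRr1 (ltW m0)) -powRD; last by rewrite (gt_eqF m0) implybT.
  by rewrite addrC subrK.
rewrite /Qf e -mulrA ler_peMr ?(ltW m0) //.
rewrite ler_pdivlMr ?powR_gt0 // mul1r.
apply: ge0_ler_powR; rewrite ?nnegrE ?subr_ge0 ?(ltW q1) ?(ltW M0) ?(ltW m0) //.
by apply: ltW; apply: lt_le_trans (mx_le i t j).
Qed.

Hypothesis hQ : forall i,
  (\int[P]_t (Qf i t)%:E = (fine (\int[P]_t (Qf i t)%:E))%:E)%E.
Hypothesis hV : forall i j,
  (\int[P]_t ((X i t j) ^+ 2)%:E = (fine (\int[P]_t ((X i t j) ^+ 2)%:E))%:E)%E.

Definition qI i := fine (\int[P]_t (Qf i t)%:E).
Definition vI i j := fine (\int[P]_t ((X i t j) ^+ 2)%:E).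
Definition E0 := expR (lam * M).
Definition aij i j := lam * (dl + qI i / M `^ (q - 1)) + lam ^+ 2 * E0 * vI i j.

Lemma measurable_Y i j : measurable_fun setT (Ydisc i j).
Proof. exact: (measurableT_comp (measurable_Yd R dl N) (mX i j)). Qed.

Lemma mgf_pt i j c t : `|c| <= lam ->
  expR (c * Ydisc i j t) <= c * X i t j +
    ((lam / M `^ (q - 1)) * Qf i t + (lam ^+ 2 * E0) * (X i t j) ^+ 2 + (1 + lam * dl)).
Proof.
move=> hc; set x := X i t j; set y := Ydisc i j t; set Q := Qf i t.
set K := M `^ (q - 1).
have K0 : 0 < K by rewrite powR_gt0.
have E00 : 0 < E0 by rewrite expR_gt0.
have hy1 : `|y| <= M by rewrite -NdlE; exact: (@Yd_absN R dl N dl0 x).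
have hy2 : `|y| <= `|x| by exact: (@Yd_abs R dl N dl0 x).
have hd : `|x - y| <= dl + Q / K by exact: dev_bound.
have c0 : 0 <= `|c| by [].
have f1 : c * y <= lam * M.
  apply: le_trans (ler_norm _) _; rewrite normrM.
  by apply: ler_pM => //.
have f2 : expR (c * y) <= 1 + c * y + (c * y) ^+ 2 * E0.
  by apply: expR_quad f1 _; rewrite mulr_ge0 // ltW.
have f3 : c * y <= c * x + lam * (dl + Q / K).
  have : - (c * (x - y)) <= lam * (dl + Q / K).
    apply: le_trans (ler_norm _) _; rewrite normrN normrM.
    by apply: ler_pM.
  rewrite mulrBr; lra.
have f4 : (c * y) ^+ 2 <= lam ^+ 2 * x ^+ 2.
  have g : `|c * y| <= lam * `|x| by rewrite normrM; apply: ler_pM.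
  have g2 : `|c * y| * `|c * y| <= (lam * `|x|) * (lam * `|x|).
    by apply: ler_pM.
  rewrite -[(c * y) ^+ 2]real_normK ?num_real // expr2; apply: le_trans g2 _.
  by rewrite mulrACA -!expr2 real_normK ?num_real.
have f5 : (c * y) ^+ 2 * E0 <= lam ^+ 2 * x ^+ 2 * E0.
  by apply: ler_wpM2r => //; exact: ltW.
have e : lam * (dl + Q / K) = lam / K * Q + lam * dl.
  by rewrite mulrDr addrC mulrA mulrAC.
rewrite e in f3.
have e2 : lam ^+ 2 * x ^+ 2 * E0 = lam ^+ 2 * E0 * x ^+ 2 by rewrite mulrAC.
rewrite e2 in f5.
lra.
Qed.


Lemma mgf_one i j c : `|c| <= lam ->
  (\int[P]_t (expR (c * Ydisc i j t))%:E <= (1 + aij i j)%:E)%E.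
Proof.
move=> hc.
set K := M `^ (q - 1).
have K0 : 0 < K by rewrite powR_gt0.
set h := fun t => (lam / K) * Qf i t + (lam ^+ 2 * E0) * (X i t j) ^+ 2 + (1 + lam * dl).
have mX2 : measurable_fun setT (fun t => (X i t j) ^+ 2) by apply: measurable_funX.
have mh : measurable_fun setT h.
  apply: measurable_funD; last exact: measurable_cst.
  apply: measurable_funD; apply: measurable_funM => //; try exact: measurable_cst.
  exact: measurable_Qf.
have la0 : 0 <= lam / K by rewrite divr_ge0 // ltW.
have lb0 : 0 <= lam ^+ 2 * E0 by rewrite mulr_ge0 ?expR_ge0 // sqr_ge0.
have lc0 : 0 <= 1 + lam * dl by rewrite addr_ge0 // mulr_ge0 // ltW // dl0.
have h0 t : 0 <= h t.
  by rewrite /h; apply: addr_ge0 => //; apply: addr_ge0; apply: mulr_ge0 => //;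
    [exact: Qf_ge0|exact: sqr_ge0].
have inth : (\int[P]_t (h t)%:E =
    ((lam / K) * qI i + (lam ^+ 2 * E0) * vI i j + (1 + lam * dl))%:E)%E.
  rewrite /h (@int_lin3 R d T P _ _ _ _ _ la0 lb0 lc0 (measurable_Qf i) mX2 (Qf_ge0 i)); last first.
    by move=> t; exact: sqr_ge0.
  by rewrite hQ hV -!EFinM -!EFinD.
have ih : P.-integrable setT (fun t => (h t)%:E).
  apply/integrableP; split; first exact/measurable_EFinP.
  under eq_integral do rewrite gee0_abs ?lee_fin //.
  by rewrite inth ltry.
have icx : P.-integrable setT (fun t => (c * X i t j)%:E).
  rewrite (_ : (fun t => _) = (fun t => c%:E * (X i t j)%:E)%E); last first.
    by apply: funext => t; rewrite EFinM.
  exact: integrableZl.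
apply: (@le_trans _ _ (\int[P]_t ((c * X i t j)%:E + (h t)%:E))%E).
  apply: ge0_le_integral.
  - exact: measurableT.
  - by move=> t _; rewrite lee_fin expR_ge0.
  - apply/measurable_EFinP; apply: measurableT_comp; first exact: measurable_expR.
    by apply: measurable_funM; [exact: measurable_cst|exact: measurable_Y].
  - apply: emeasurable_funD; apply/measurable_EFinP => //.
    by apply: measurable_funM => //; exact: measurable_cst.
  - by move=> t _; rewrite -EFinD lee_fin; exact: mgf_pt.
rewrite integralD //.
under eq_integral do rewrite EFinM.
rewrite integralZl // X0 mule0 add0e inth lee_fin /aij.
rewrite /K; lra.
Qed.

Definition Ssum j t := \sum_i Ydisc i j t.

Lemma measurable_S j : measurable_fun setT (Ssum j).
Proof. by apply: measurable_sum => i; exact: measurable_Y. Qed.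

Lemma mgf_sum j c : `|c| <= lam ->
  (\int[P]_t (expR (c * Ssum j t))%:E <= (expR (\sum_i aij i j))%:E)%E.
Proof.
move=> hc.
have e t : expR (c * Ssum j t) = \prod_i expR (c * Yd R dl N (X i t j)).
  by rewrite /Ssum mulr_sumr expR_sum.
under eq_integral do rewrite e.
rewrite (@indep_prod R d T P n p X mX indX j (fun i x => expR (c * Yd R dl N x))
   (map (fun v => expR (c * v)) (gridY R dl N))); last 3 first.
- move=> i; apply: measurableT_comp; first exact: measurable_expR.
  by apply: measurable_funM; [exact: measurable_cst|exact: measurable_Yd].
- by move=> i x; exact: (map_f (fun v => expR (c * v)) (Yd_in R dl N x)).
- by move=> v /mapP [w _ ->]; exact: expR_ge0.
have fb i : (\int[P]_t (expR (c * Ydisc i j t))%:E =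
    (fine (\int[P]_t (expR (c * Ydisc i j t))%:E))%:E)%E /\
    fine (\int[P]_t (expR (c * Ydisc i j t))%:E) <= 1 + aij i j.
  apply: fin_between; last exact: mgf_one.
  by apply: integral_ge0 => t _; rewrite lee_fin expR_ge0.
rewrite (eq_bigr (fun i => (fine (\int[P]_t (expR (c * Ydisc i j t))%:E))%:E)); last first.
  by move=> i _; rewrite -(fb i).1.
rewrite prodEFin expR_sum lee_fin; apply: ler_prod => i _.
apply/andP; split; first by rewrite fine_ge0 // integral_ge0 // => t _; rewrite lee_fin expR_ge0.
apply: le_trans (fb i).2 _; exact: expR_ge1Dx.
Qed.

Definition mS t := \big[Num.max/0]_(j < p) `|Ssum j t|.

Lemma measurable_mS : measurable_fun setT mS.
Proof.
apply: measurable_bigmax => j.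
by apply: measurableT_comp; [exact: normr_measurable|exact: measurable_S].
Qed.

Lemma mS_ge0 t : 0 <= mS t.
Proof. by rewrite /mS; elim/big_ind: _ => // a b ha hb; rewrite le_max ha. Qed.

Hypothesis p0 : (0 < p)%N.

Definition Wsum t := \sum_(j < p) (expR (lam * Ssum j t) + expR (- lam * Ssum j t)).

Lemma expmS_le t : expR (lam * mS t) <= Wsum t.
Proof.
have [j0 _ ej0] := @eq_bigmax _ _ _ 0 (Ordinal p0) xpredT (fun j => `|Ssum j t|) isT
  (fun i _ => normr_ge0 _).
rewrite /mS ej0 /Wsum (bigD1 j0) //=.
apply: (@le_trans _ _ (expR (lam * Ssum j0 t) + expR (- lam * Ssum j0 t))); last first.
  by rewrite lerDl; apply: sumr_ge0 => j _; rewrite addr_ge0 ?expR_ge0.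
have [s0|s0] := leP 0 (Ssum j0 t).
  by rewrite ger0_norm // lerDl expR_ge0.
by rewrite ltr0_norm // mulrN -mulNr lerDr expR_ge0.
Qed.

Lemma measurable_W : measurable_fun setT Wsum.
Proof.
apply: measurable_sum => j; apply: measurable_funD;
  (apply: measurableT_comp; first exact: measurable_expR);
  by apply: measurable_funM; [exact: measurable_cst|exact: measurable_S].
Qed.

Lemma W_ge0 t : 0 <= Wsum t.
Proof. by apply: sumr_ge0 => j _; rewrite addr_ge0 ?expR_ge0. Qed.

Lemma int_W G : (forall j, \sum_i aij i j <= G) ->
  (\int[P]_t (Wsum t)%:E <= (p%:R * (2 * expR G))%:E)%E.
Proof.
move=> hG.
rewrite /Wsum; under eq_integral do rewrite -sumEFin.
rewrite ge0_integral_sum //; try by [move=> j t _; rewrite lee_fin addr_ge0 ?expR_ge0 |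
  move=> j; apply/measurable_EFinP; apply: measurable_funD;
    (apply: measurableT_comp; first exact: measurable_expR);
    by apply: measurable_funM; [exact: measurable_cst|exact: measurable_S]].
rewrite (_ : (p%:R * (2 * expR G))%:E = \sum_(j < p) (2 * expR G)%:E)%E; last first.
  by rewrite sumEFin sumr_const card_ord mulr_natl.
apply: lee_sum => j _.
under eq_integral do rewrite EFinD.
have me (c : R) : measurable_fun setT (fun t => (expR (c * Ssum j t))%:E).
  apply/measurable_EFinP; apply: measurableT_comp; first exact: measurable_expR.
  by apply: measurable_funM; [exact: measurable_cst|exact: measurable_S].
rewrite ge0_integralD //; try by move=> t _; rewrite lee_fin expR_ge0.
have eG (c : R) : `|c| <= lam ->
    (\int[P]_t (expR (c * Ssum j t))%:E <= (expR G)%:E)%E.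
  move=> hc; apply: le_trans (mgf_sum j c hc) _.
  by rewrite lee_fin ler_expR.
rewrite -[2]/(1 + 1) mulrDl mul1r EFinD; apply: leeD; apply: eG.
  by rewrite ger0_norm // ltW.
by rewrite normrN ger0_norm // ltW.
Qed.

Lemma mS_int G : 0 <= G -> (forall j, \sum_i aij i j <= G) ->
  (\int[P]_t (mS t)%:E <= ((ln (2 * p%:R) + G) / lam)%:E)%E.
Proof.
move=> G0 hG.
set c0 := 2 * p%:R * expR G.
have p1 : 1 <= p%:R :> R by rewrite ler1n.
have eG1 : 1 <= expR G by rewrite -expR0 ler_expR.
have c01 : 1 <= c0.
  rewrite /c0; have : 1 <= 2 * p%:R :> R by lra.
  move=> h; rewrite -[1]mulr1; apply: ler_pM => //; lra.
have c00 : 0 < c0 by lra.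
have lnc0 : ln c0 = ln (2 * p%:R) + G.
  by rewrite /c0 lnM ?expRK // posrE ?expR_gt0 //; lra.
have lnc0_ge0 : 0 <= ln c0 by rewrite ln_ge0.
have ic0 : 0 <= c0^-1 by rewrite invr_ge0 ltW.
have pw t : lam * mS t + 1 <= c0^-1 * Wsum t + ln c0.
  apply: le_trans (@lse_bound R (lam * mS t) c0 c00) _.
  rewrite lerD2r mulrC; apply: ler_wpM2l => //; exact: expmS_le.
have h1 : (\int[P]_t (lam * mS t + 1)%:E <= \int[P]_t (c0^-1 * Wsum t + ln c0)%:E)%E.
  apply: ge0_le_integral.
  - exact: measurableT.
  - by move=> t _; rewrite lee_fin addr_ge0 // mulr_ge0 ?mS_ge0 // ltW.
  - apply/measurable_EFinP; apply: measurable_funD; last exact: measurable_cst.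
    by apply: measurable_funM; [exact: measurable_cst|exact: measurable_mS].
  - apply/measurable_EFinP; apply: measurable_funD; last exact: measurable_cst.
    by apply: measurable_funM; [exact: measurable_cst|exact: measurable_W].
  - by move=> t _; rewrite lee_fin.
rewrite (@int_lin1 R d T P lam 1 mS (ltW lam0) ler01 measurable_mS mS_ge0) in h1.
rewrite (@int_lin1 R d T P c0^-1 (ln c0) Wsum ic0 lnc0_ge0 measurable_W W_ge0) in h1.
have h2 : (c0^-1%:E * \int[P]_t (Wsum t)%:E <= 1%:E)%E.
  apply: le_trans (lee_wpmul2l _ (int_W G hG)) _; first by rewrite lee_fin.
  by rewrite -EFinM lee_fin /c0 mulrA [_ * 2]mulrC mulVf // gt_eqF.
have h3 := le_trans h1 (leeD2r _ h2).
have I0 : (0 <= \int[P]_t (mS t)%:E)%E.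
  by apply: integral_ge0 => t _; rewrite lee_fin mS_ge0.
move: h3 I0; case: (\int[P]_t (mS t)%:E)%E => [r| |] //=.
  rewrite -EFinM -!EFinD !lee_fin => h3 r0.
  rewrite ler_pdivlMr // -lnc0; lra.
by rewrite mulry gtr0_sg // mul1e.
Qed.

Hypothesis n0 : (0 < n)%N.
Variables (Bq s2 : R).
Hypotheses (Bq0 : 0 <= Bq) (s20 : 0 <= s2).
Hypothesis hQsum : \sum_i qI i <= n%:R * Bq.
Hypothesis hVsum : forall j, \sum_i vI i j <= n%:R * s2.

Definition Gv := lam * (n%:R * dl + (n%:R * Bq) / M `^ (q - 1)) +
  lam ^+ 2 * E0 * (n%:R * s2).

Lemma Gv_ge0 : 0 <= Gv.
Proof.
have K0 : 0 < M `^ (q - 1) by rewrite powR_gt0.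
rewrite /Gv addr_ge0 // ?mulr_ge0 ?addr_ge0 ?divr_ge0 ?mulr_ge0 ?expR_ge0 ?sqr_ge0 //;
  by rewrite ?ltW ?dl0.
Qed.

Lemma hG j : \sum_i aij i j <= Gv.
Proof.
rewrite /aij big_split /= -!mulr_sumr /Gv.
apply: lerD.
  apply: ler_wpM2l; first exact: ltW.
  rewrite big_split /= sumr_const card_ord mulr_natl lerD2l -mulr_suml.
  apply: ler_wpM2r; first by rewrite invr_ge0 powR_ge0.
  exact: hQsum.
apply: ler_wpM2l; last exact: hVsum.
by rewrite mulr_ge0 ?expR_ge0 ?sqr_ge0.
Qed.

Lemma pt_bound t :
  \big[Num.max/0]_(j < p) `|n%:R^-1 * \sum_i X i t j| <=
  n%:R^-1 * mS t + (n%:R^-1 / M `^ (q - 1)) * (\sum_i Qf i t) + dl.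
Proof.
have K0 : 0 < M `^ (q - 1) by rewrite powR_gt0.
have n0' : 0 < n%:R :> R by rewrite ltr0n.
have sQ : 0 <= \sum_i Qf i t by apply: sumr_ge0 => i _; exact: Qf_ge0.
apply: bigmax_le.
  have a1 : 0 <= n%:R^-1 * mS t by rewrite mulr_ge0 ?invr_ge0 ?ler0n ?mS_ge0.
  have a2 : 0 <= (n%:R^-1 / M `^ (q - 1)) * (\sum_i Qf i t).
    by rewrite mulr_ge0 // divr_ge0 ?invr_ge0 ?ler0n // ltW.
  have := dl0; lra.
move=> j _.
have e : \sum_i X i t j = Ssum j t + \sum_i (X i t j - Ydisc i j t).
  by rewrite /Ssum -big_split /=; apply: eq_bigr => i _; rewrite addrC subrK.
rewrite normrM ger0_norm ?invr_ge0 ?ler0n // e.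
have h1 : `|Ssum j t + \sum_i (X i t j - Ydisc i j t)| <=
    mS t + (n%:R * dl + (\sum_i Qf i t) / M `^ (q - 1)).
  apply: le_trans (ler_normD _ _) _; apply: lerD.
    exact: (le_bigmax _ (fun j => `|Ssum j t|) j).
  apply: le_trans (ler_norm_sum _ _ _) _.
  apply: le_trans (ler_sum _ (fun i _ => dev_bound i j t)) _.
  by rewrite big_split /= sumr_const card_ord mulr_natl -mulr_suml.
apply: le_trans (ler_wpM2l _ h1) _; first by rewrite invr_ge0 ler0n.
set a := mS t; set b := \sum_i Qf i t; set K := M `^ (q - 1).
have nn : n%:R != 0 :> R by rewrite gt_eqF.
have Kn : K != 0 by rewrite gt_eqF.
rewrite mulrDr mulrDr mulrA mulVf // mul1r mulrA.
lra.
Qed.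

Lemma Emax_bound : (Emax P X <=
  (ln (2 * p%:R) / n%:R / lam + 2 * dl + 2 * (Bq / M `^ (q - 1)) + lam * E0 * s2)%:E)%E.
Proof.
have K0 : 0 < M `^ (q - 1) by rewrite powR_gt0.
have n0' : 0 < n%:R :> R by rewrite ltr0n.
have mQs : measurable_fun setT (fun t => \sum_i Qf i t).
  by apply: measurable_sum => i; exact: measurable_Qf.
have Qs0 t : 0 <= \sum_i Qf i t by apply: sumr_ge0 => i _; exact: Qf_ge0.
have ia : 0 <= n%:R^-1 :> R by rewrite invr_ge0 ler0n.
have ib : 0 <= n%:R^-1 / M `^ (q - 1) by rewrite divr_ge0 // ltW.
have step1 : (Emax P X <= \int[P]_t (n%:R^-1 * mS t +
    (n%:R^-1 / M `^ (q - 1)) * (\sum_i Qf i t) + dl)%:E)%E.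
  apply: ge0_le_integral.
  - exact: measurableT.
  - move=> t _; rewrite lee_fin.
    by elim/big_ind: _ => // a b ha hb; rewrite le_max ha.
  - apply/measurable_EFinP; apply: measurable_bigmax => j.
    apply: measurableT_comp; first exact: normr_measurable.
    apply: measurable_funM; first exact: measurable_cst.
    by apply: measurable_sum => i; exact: mX.
  - apply/measurable_EFinP; apply: measurable_funD; last exact: measurable_cst.
    apply: measurable_funD; apply: measurable_funM => //; try exact: measurable_cst.
    exact: measurable_mS.
  - by move=> t _; rewrite lee_fin; exact: pt_bound.
rewrite (@int_lin3 R d T P _ _ _ _ _ ia ib (ltW dl0) measurable_mS mQs mS_ge0 Qs0) in step1.
have hsum : (\int[P]_t (\sum_i Qf i t)%:E = (\sum_i qI i)%:E)%E.
  under eq_integral do rewrite -sumEFin.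
  rewrite ge0_integral_sum //; last first.
    by move=> i t _; rewrite lee_fin Qf_ge0.
    by move=> i; apply/measurable_EFinP; exact: measurable_Qf.
  by rewrite -sumEFin; apply: eq_bigr => i _; rewrite hQ.
rewrite hsum in step1.
apply: le_trans step1 _.
apply: (@le_trans _ _ ((n%:R^-1 * ((ln (2 * p%:R) + Gv) / lam))%:E +
   (n%:R^-1 / M `^ (q - 1) * (n%:R * Bq))%:E + dl%:E)%E).
  apply: leeD => //; apply: leeD.
    by rewrite EFinM; apply: lee_wpmul2l; [rewrite lee_fin|exact: mS_int Gv_ge0 hG].
  by rewrite -EFinM lee_fin; apply: ler_wpM2l => //; exact: hQsum.
rewrite -!EFinD lee_fin /Gv.
set L := ln (2 * p%:R); set K := M `^ (q - 1).
have nn : n%:R != 0 :> R by rewrite gt_eqF.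
have Kn : K != 0 by rewrite gt_eqF.
have ln0 : lam != 0 by rewrite gt_eqF.
rewrite le_eqVlt; apply/orP; left; apply/eqP.
field.
by rewrite Kn nn ln0.
Qed.

End MainS.


Section Arith.
Variable R : realType.

Lemma pwE (x a : R) : 0 < x -> x `^ a = expR (a * ln x).
Proof. by move=> x0; rewrite /powR gt_eqF. Qed.

Lemma eln (x : R) : 0 < x -> x = expR (ln x).
Proof. by move=> x0; rewrite lnK // posrE. Qed.

Lemma sq_exp_bound (l : R) : 0 < l -> l ^+ 2 <= 16 * expR (l / 2).
Proof.
move=> l0.
have h := expR_ge1Dx (l / 4).
have e : expR (l / 2) = expR (l / 4) ^+ 2 by rewrite expr2 -expRD; congr expR; lra.
rewrite e.
have h0 : 0 <= l / 4 by lra.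
have : (l / 4) ^+ 2 <= expR (l / 4) ^+ 2.
  rewrite ler_sqr ?nnegrE ?expR_ge0 //; lra.
have -> : (l / 4) ^+ 2 = l ^+ 2 / 16 by rewrite expr_div_n; congr (_ / _); rewrite -natrX.
move=> h1; have : l ^+ 2 / 16 * 16 <= 16 * expR (l / 4) ^+ 2 by lra.
by rewrite mulfVK.
Qed.

Lemma exp_bound (r m l : R) : 0 <= r <= 1 -> 0 < l -> l = expR m ->
  expR (2 * (1 - r) * m - l / 2) <= 16.
Proof.
move=> /andP [r0 r1] l0 lm.
have [m0|m0] := leP m 0.
  apply: le_trans (_ : expR 0 <= 16); last by rewrite expR0; lra.
  rewrite ler_expR.
  have : 0 <= (1 - r) * (- m) by rewrite mulr_ge0 //; lra.
  lra.
apply: le_trans (_ : expR (2 * m - l / 2) <= _).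
  rewrite ler_expR.
  have : 0 <= r * m by rewrite mulr_ge0 // ltW.
  lra.
have e2 : expR (2 * m) = l ^+ 2 by rewrite lm expr2 -expRD; congr expR; lra.
rewrite expRD expRN e2 ler_pdivrMr ?expR_gt0 //.
exact: sq_exp_bound.
Qed.

Lemma final_arith (q B s L : R) : 2 < q -> 0 < B -> 0 < s -> 0 < L ->
  forall l M lam, l = ln ((B ^+ 2 / s ^+ 2) * L `^ (1 - 2 / q)) -> 0 < l ->
  M = B * (l / L) `^ q^-1 -> lam = l / (2 * M) ->
  L / lam + 2 * (B `^ q / M `^ (q - 1)) + lam * expR (lam * M) * s ^+ 2 <=
  12 * (B * L `^ (1 - q^-1) * l `^ (q^-1 - 1)).
Proof.
move=> q2 B0 s0 L0 l M lam ldef l0 Mdef lamdef.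
set r := q^-1.
have q0 : 0 < q by lra.
have qr : q * r = 1 by rewrite /r mulfV // gt_eqF.
have r0 : 0 < r by rewrite /r invr_gt0.
have r1 : r <= 1 by rewrite /r invf_le1 //; lra.
set A := ln L; set b := ln B; set g := ln s; set m := ln l.
have eL : L = expR A := @eln L L0.
have eB : B = expR b := @eln B B0.
have es : s = expR g := @eln s s0.
have el : l = expR m := @eln l l0.
have hl : l = 2 * b - 2 * g + (1 - 2 * r) * A.
  rewrite ldef lnM ?posrE ?divr_gt0 ?exprn_gt0 ?powR_gt0 //.
  rewrite pwE // -/A lnM ?posrE ?invr_gt0 ?exprn_gt0 // lnV ?posrE ?exprn_gt0 //.
  rewrite expRK !lnXn // -/b -/g /r; lra.
have hM : M = expR (b + r * (m - A)).
  rewrite Mdef pwE ?divr_gt0 // lnM ?posrE ?invr_gt0 // lnV ?posrE // -/m -/A.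
  by rewrite expRD -eB.
have M0 : 0 < M by rewrite hM expR_gt0.
have lM : lam * M = l / 2 by rewrite lamdef invfM mulrA -mulrA mulVf ?gt_eqF // mulr1 mulrC.
have htau : B * L `^ (1 - r) * l `^ (r - 1) = expR (b + (1 - r) * A + (r - 1) * m).
  by rewrite pwE // pwE // -/A -/m !expRD -eB.
rewrite htau.
have hT1 : L / lam = 2 * expR (b + (1 - r) * A + (r - 1) * m).
  rewrite lamdef invf_div el eL hM -!expRN.
  rewrite mulrA mulrA [expR A * 2]mulrC -mulrA -mulrA -!expRD.
  by congr (_ * expR _); lra.
have hT2 : B `^ q / M `^ (q - 1) = expR (b + (1 - r) * A + (r - 1) * m).
  rewrite hM eB -!expRM -expRN -expRD; congr expR.
  have h1 : q * r * m = m by rewrite qr mul1r.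
  have h2 : q * r * A = A by rewrite qr mul1r.
  lra.
have hT3 : lam * expR (lam * M) * s ^+ 2 =
    expR (b + (1 - r) * A + (r - 1) * m) / 2 * expR (2 * (1 - r) * m - l / 2).
  rewrite lM.
  have lamE : lam = expR (m - b - r * (m - A)) / 2.
    rewrite lamdef hM {1}el invfM -expRN mulrCA -expRD mulrC.
    by congr (expR _ / 2); lra.
  have ex : (b + (1 - r) * A + (r - 1) * m) + (2 * (1 - r) * m - l / 2) =
      (m - b - r * (m - A)) + l / 2 + (g + g) by lra.
  apply: (@etrans _ _ (expR ((b + (1 - r) * A + (r - 1) * m) +
     (2 * (1 - r) * m - l / 2)) / 2)); last by rewrite [in LHS]expRD; ring.
  by rewrite ex lamE es !expRD; ring.
rewrite hT1 hT2 hT3.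
set tau := expR (b + (1 - r) * A + (r - 1) * m).
have t0 : 0 < tau by rewrite expR_gt0.
have Bd := @exp_bound r m l (introT andP (conj (ltW r0) r1)) l0 el.
have : tau / 2 * expR (2 * (1 - r) * m - l / 2) <= tau / 2 * 16.
  by apply: ler_wpM2l => //; rewrite divr_ge0 // ltW.
lra.
Qed.

End Arith.


Theorem proposition4p4 (R : realType) :
  exists C : R, 0 < C /\
  forall (q : R) (n p : nat) (sigma B : R),
    2 < q -> (1 <= n)%N -> (1 <= p)%N -> 0 < sigma -> 0 < B ->
    expR 1 < (B ^+ 2 / sigma ^+ 2) `^ (q / (q - 2)) * (ln (2 * p%:R) / n%:R) ->
    forall (d : measure_display) (T : measurableType d) (P : probability T R)
           (X : 'I_n -> T -> 'I_p -> R),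
      (forall i j, measurable_fun setT (fun t => X i t j)) ->
      (forall i j, P.-integrable setT (fun t => (X i t j)%:E)) ->
      (forall i j, (\int[P]_t (X i t j)%:E = 0)%E) ->
      indep_rvecs P X ->
      (Vvar P X <= (sigma ^+ 2)%:E)%E ->
      (Dq P X q <= B%:E)%E ->
      (Emax P X <=
        (C * B * (ln (2 * p%:R) / n%:R) `^ (1 - q^-1)
           * (ln ((B ^+ 2 / sigma ^+ 2) * (ln (2 * p%:R) / n%:R) `^ (1 - 2 / q)))
               `^ (q^-1 - 1))%:E)%E.
Proof.
exists 12; split; first by [].
move=> q n p sigma B q2 n1 p1 s0 B0 hcond d T P X mX iX X0 indX hV hD.
have q1 : 1 < q by lra.
have q0 : 0 < q by lra.
have n0 : (0 < n)%N by [].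
have p0 : (0 < p)%N by [].
have n0' : 0 < n%:R :> R by rewrite ltr0n.
set L := ln (2 * p%:R) / n%:R.
have L0 : 0 < L.
  rewrite /L divr_gt0 // ln_gt0 //.
  have : 1 <= p%:R :> R by rewrite ler1n.
  lra.
set a := B ^+ 2 / sigma ^+ 2.
have a0 : 0 < a by rewrite /a divr_gt0 // exprn_gt0.
set l := ln (a * L `^ (1 - 2 / q)).
have l0 : 0 < l.
  set u := 1 - 2 / q.
  have u0 : 0 < u.
    rewrite /u subr_gt0 ltr_pdivrMr //; lra.
  have uc : u * (q / (q - 2)) = 1.
    rewrite /u; field; apply/andP; split; rewrite gt_eqF //; lra.
  have h : ln (expR 1) < ln (a `^ (q / (q - 2)) * L).
    by rewrite ltr_ln // posrE ?expR_gt0 // mulr_gt0 // powR_gt0.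
  rewrite expRK lnM ?posrE ?powR_gt0 // ln_powR in h.
  have h2 : u * 1 < u * (q / (q - 2) * ln a + ln L) by rewrite ltr_pM2l.
  rewrite mulrDr mulrA uc mul1r mulr1 in h2.
  rewrite /l lnM ?posrE ?powR_gt0 // ln_powR -/u.
  lra.
have hVj j : ((n%:R^-1)%:E * \sum_(i < n) \int[P]_t ((X i t j) ^+ 2)%:E <=
    (sigma ^+ 2)%:E)%E.
  apply: le_trans hV; rewrite /Vvar.
  exact: (le_bigmax _ (fun j => ((n%:R^-1)%:E *
    \sum_(i < n) \int[P]_t ((X i t j) ^+ 2)%:E)%E) j).
have V0 j i : (0 <= \int[P]_t ((X i t j) ^+ 2)%:E)%E.
  by apply: integral_ge0 => t _; rewrite lee_fin sqr_ge0.
have hVf j := @sum_fin R n (fun i => \int[P]_t ((X i t j) ^+ 2)%:E)%E _ (V0 j)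
  (@mul_inv_le R n _ _ n0 (hVj j)).
have hV' i j := (hVf j).1 i.
have hVsum j := (hVf j).2.
set Z := ((n%:R^-1)%:E * \sum_(i < n)
   \int[P]_t ((\big[Num.max/0]_(j < p) `|X i t j|) `^ q)%:E)%E.
have Q0 i : (0 <= \int[P]_t ((\big[Num.max/0]_(j < p) `|X i t j|) `^ q)%:E)%E.
  by apply: integral_ge0 => t _; rewrite lee_fin powR_ge0.
have Z0 : (0 <= Z)%E.
  by rewrite /Z mule_ge0 // ?lee_fin ?invr_ge0 ?ler0n // sume_ge0.
have hZ := @poweR_le R Z q B Z0 q0 B0 hD.
have hQf := @sum_fin R n _ _ Q0 (@mul_inv_le R n _ _ n0 hZ).
have hQ i := hQf.1 i.
have hQsum := hQf.2.
apply/lee_addgt0Pr; move=> eps eps0.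
set M := B * (l / L) `^ q^-1.
have M0 : 0 < M by apply: mulr_gt0 => //; apply: powR_gt0; exact: divr_gt0.
set lam := l / (2 * M).
have lam0 : 0 < lam by rewrite divr_gt0 // mulr_gt0.
set N := (Num.Def.archi_bound (2 * M / eps)).+1.
have N0 : (0 < N)%N by [].
have hN : 2 * M / eps < N%:R.
  apply: lt_le_trans (archi_boundP _) _; first by rewrite divr_ge0 // ltW // mulr_gt0.
  by rewrite ler_nat.
have hdl : 2 * dl R M N <= eps.
  have NN : 0 < N%:R :> R by rewrite ltr0n.
  have h1 : 2 * M < N%:R * eps by rewrite -ltr_pdivrMr.
  rewrite /dl mulrA ler_pdivrMr //; lra.
have Bq0 : 0 <= B `^ q by exact: powR_ge0.
have s20 : 0 <= sigma ^+ 2 by exact: sqr_ge0.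
have hE := @Emax_bound R d T P n p X q mX iX X0 indX q1 M lam N M0 lam0 N0 hQ hV'
  p0 n0 (B `^ q) (sigma ^+ 2) Bq0 s20 hQsum hVsum.
apply: le_trans hE _; rewrite -EFinD lee_fin /E0.
have fa := @final_arith R q B sigma L q2 B0 s0 L0 l M lam erefl l0 erefl erefl.
rewrite -/L; rewrite -!mulrA in fa *.
lra.
Qed.
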